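(* Let $L\ge1$, $D\ge1$, and for $\mathbf{u}=[\mathbf{u}_l]_{l=1}^L$ with $\mathbf{u}_l\in\mathbb{R}^D$ let $\mathcal{P}_{conv}(\mathbf{u})\in\mathbb{R}^D$ be the vector with $\langle\mathbf{x},\mathcal{P}_{conv}(\mathbf{u})\rangle=\big((((\mathbf{x}\star\mathbf{u}_1)\star\mathbf{u}_2)\cdots)\star\mathbf{u}_{L-1}\big)^\top\mathbf{u}_L$ for all $\mathbf{x}\in\mathbb{R}^D$. Then for every $\mathbf{w}\in\mathbb{R}^D$, $$\mathcal{R}_{\mathcal{P}_{conv}}(\mathbf{w}):=\min_{\mathbf{u}:\mathcal{P}_{conv}(\mathbf{u})=\mathbf{w}}\|\mathbf{u}\|_2^2=L\|\hat{\mathbf{w}}\|_{2/L}^{2/L}.$$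
   Context: Indices run over $0,\dots,D-1$. $(\mathbf{h}\star\mathbf{u})[d]=\frac{1}{\sqrt D}\sum_{k=0}^{D-1}\mathbf{u}[k]\mathbf{h}[(d+k)\bmod D]$. $\hat{\mathbf{w}}[d]=\frac{1}{\sqrt D}\sum_{p=0}^{D-1}\mathbf{w}[p]e^{-2\pi\mathrm{i}pd/D}$. $\|\mathbf{u}\|_2^2=\sum_l\|\mathbf{u}_l\|_2^2$; for $p>0$ and $\mathbf{z}\in\mathbb{C}^D$, $\|\mathbf{z}\|_p=(\sum_d|\mathbf{z}[d]|^p)^{1/p}$. *)

(* Defs.v *)
From HB Require Import structures.
From mathcomp Require Import all_boot all_order all_algebra.
From mathcomp Require Import all_classical all_reals all_analysis.
Set Implicit Arguments. Unset Strict Implicit. Unset Printing Implicit Defensive.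
Import Order.TTheory GRing.Theory Num.Theory.
Local Open Scope ring_scope.

Section Defs.
Variable R : realType.

Definition cyc (D : nat) (h : 'rV[R]_D) (n : nat) : R :=
  if @insub nat (fun m => (m < D)%N) 'I_D (n %% D)%N is Some i then h 0 i else 0.

Definition dotv (D : nat) (x y : 'rV[R]_D) : R := \sum_(d < D) x 0 d * y 0 d.

Definition star (D : nat) (h u : 'rV[R]_D) : 'rV[R]_D :=
  \row_(d < D) ((Num.sqrt (D%:R))^-1 * \sum_(k < D) u 0 k * cyc h (d + k)%N).

(* x |-> ((((x * u_1) * u_2) ...) * u_{L-1})^T u_L  (u_1..u_L indexed by 'I_L) *)
Definition Pform (L D : nat) (u : 'I_L -> 'rV[R]_D) (x : 'rV[R]_D) : R :=
  match enum 'I_L with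
  | [::] => 0
  | l0 :: s => dotv (foldl (fun acc l => star acc (u l)) x (belast l0 s)) (u (last l0 s))
  end.

(* P_conv(u): the vector with <x, P_conv(u)> = Pform u x for all x
   (its i-th entry is the form evaluated at the i-th standard basis vector). *)
Definition Pconv (L D : nat) (u : 'I_L -> 'rV[R]_D) : 'rV[R]_D :=
  \row_(i < D) Pform u (delta_mx 0 i).

Definition sqnorm (L D : nat) (u : 'I_L -> 'rV[R]_D) : R :=
  \sum_(l < L) \sum_(d < D) (u l 0 d) ^+ 2.

(* DFT: w^[d] = 1/sqrt D * sum_p w[p] e^{-2 pi i p d / D} = re + i im *)
Definition dft_re (D : nat) (w : 'rV[R]_D) (d : 'I_D) : R :=
  (Num.sqrt (D%:R))^-1 *
  \sum_(p < D) w 0 p * cos (2 * pi * (p%:R) * (d%:R) / D%:R).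
Definition dft_im (D : nat) (w : 'rV[R]_D) (d : 'I_D) : R :=
  (Num.sqrt (D%:R))^-1 *
  \sum_(p < D) w 0 p * - sin (2 * pi * (p%:R) * (d%:R) / D%:R).
Definition dft_abs (D : nat) (w : 'rV[R]_D) (d : 'I_D) : R :=
  Num.sqrt (dft_re w d ^+ 2 + dft_im w d ^+ 2).

Definition quasinorm_pow (D : nat) (w : 'rV[R]_D) (p : R) : R :=
  \sum_(d < D) (dft_abs w d) `^ p.

End Defs.

(* Main.v *)
Require Import Defs.
From HB Require Import structures.
From mathcomp Require Import all_boot all_order all_algebra.
From mathcomp Require Import all_classical all_reals all_analysis.
From mathcomp Require Import complex.
From mathcomp Require Import ring lra.
Import Order.TTheory GRing.Theory Num.Theory.
Local Open Scope ring_scope.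
Set Implicit Arguments. Unset Strict Implicit. Unset Printing Implicit Defensive.


Section Fourier.
Variable R : realType.
Variable D : nat.
Hypothesis hD : (0 < D)%N.
Local Notation C := R[i].

Definition th : R := 2 * pi / D%:R.
Definition om : C := (cos th +i* sin th)%C.
Definition omb : C := (cos th -i* sin th)%C.

Lemma DR_neq0 : (D%:R : R) != 0.
Proof. by rewrite pnatr_eq0 -lt0n. Qed.

Lemma expom n : om ^+ n = (cos (n%:R * th) +i* sin (n%:R * th))%C.
Proof.
elim: n => [|n IH]; first by rewrite expr0 mul0r cos0 sin0.
rewrite exprSr IH /om /=.
rewrite -[((_ +i* _) * (_ +i* _))%C]/(_ +i* _)%C.
by rewrite -natr1 mulrDl mul1r cosD sinD; congr (_ +i* _)%C; ring.
Qed.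

Lemma ombE : omb = (om)^*%C.
Proof. by []. Qed.

Lemma om_omb : om * omb = 1.
Proof.
rewrite /om /omb -[((_ +i* _) * (_ +i* _))%C]/(_ +i* _)%C.
apply/eqP; rewrite eq_complex /=; apply/andP; split; apply/eqP.
  by rewrite mulrN opprK -!expr2 cos2Dsin2.
by rewrite mulrN mulrC addNr.
Qed.

Lemma omD : om ^+ D = 1.
Proof.
rewrite expom /th.
have -> : D%:R * (2 * pi / D%:R) = pi *+ 2 :> R.
  by rewrite mulrCA divff ?DR_neq0 // mulr1 mulr_natl.
by rewrite cos2pi sin2pi.
Qed.

Lemma ombD : omb ^+ D = 1.
Proof.
have h : om ^+ D * omb ^+ D = 1 by rewrite -exprMn om_omb expr1n.
by rewrite omD mul1r in h.
Qed.

Lemma om_mod n : om ^+ n = om ^+ (n %% D).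
Proof. by rewrite {1}(divn_eq n D) exprD mulnC exprM omD expr1n mul1r. Qed.

Lemma omb_mod n : omb ^+ n = omb ^+ (n %% D).
Proof. by rewrite {1}(divn_eq n D) exprD mulnC exprM ombD expr1n mul1r. Qed.

Lemma om_modE a b : (a %% D = b %% D)%N -> om ^+ a = om ^+ b.
Proof. by move=> h; rewrite om_mod h -om_mod. Qed.

Lemma om_neq1 j : (0 < j < D)%N -> om ^+ j != 1.
Proof.
move=> /andP[j0 jD]; rewrite expom; apply/negP => /eqP [] hc _.
have hx0 : 0 < j%:R * th.
  by rewrite mulr_gt0 // ?ltr0n // /th divr_gt0 ?ltr0n // mulr_gt0 // pi_gt0.
have hx2 : j%:R * th < pi *+ 2.
  have -> : j%:R * th = (pi *+ 2) * (j%:R / D%:R).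
    by rewrite /th -mulr_natl; ring.
  rewrite gtr_pMr; last by rewrite mulrn_wgt0 // pi_gt0.
  by rewrite ltr_pdivrMr ?ltr0n // mul1r ltr_nat.
move: hc hx0 hx2; set x := j%:R * th => hc hx0 hx2.
have pi0 := @pi_gt0 R.
case: (lerP x pi) => hxpi.
  have : cos x < cos 0.
    by rewrite ltr_cos ?in_itv /= ?lexx ?(ltW hx0) ?hxpi ?(ltW pi0).
  by rewrite hc cos0 ltxx.
have : cos (pi *+ 2 - x) < cos 0.
  rewrite ltr_cos ?in_itv /= ?lexx ?(ltW pi0) ?subr_gt0 //.
  by rewrite subr_ge0 (ltW hx2) /= lerBlDr mulr2n lerD2l ltW.
rewrite cosB cos2pi sin2pi mul1r mul0r addr0 hc cos0 ltxx //.
Qed.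

Lemma geom_sum0 (z : C) : z ^+ D = 1 -> z != 1 -> \sum_(i < D) z ^+ i = 0.
Proof.
move=> hz hz1; have := subrX1 z D; rewrite hz subrr => /esym/eqP.
by rewrite mulf_eq0 subr_eq0 (negbTE hz1) /= => /eqP.
Qed.

Lemma orth k m : (k < D)%N -> (m < D)%N ->
  \sum_(i < D) (om ^+ k * omb ^+ m) ^+ i = (k == m)%:R * D%:R.
Proof.
move=> kD mD; case: (ltngtP k m) => hkm.
- rewrite mul0r; apply: geom_sum0.
    by rewrite exprMn -!exprM !(mulnC _ D) !exprM omD ombD !expr1n mulr1.
  rewrite -(subnK (ltnW hkm)) exprD mulrCA -exprMn om_omb expr1n mulr1.
  rewrite ombE -rmorphXn /=; apply/negP => /eqP h.
  have : om ^+ (m - k) = 1.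
    by rewrite -[om ^+ _]conjcK h conjc1.
  move=> h1; have hj : (0 < m - k < D)%N.
    by rewrite subn_gt0 hkm /=; apply: leq_ltn_trans mD; rewrite leq_subr.
  by move: (om_neq1 hj); rewrite h1 eqxx.
- rewrite mul0r; apply: geom_sum0.
    by rewrite exprMn -!exprM !(mulnC _ D) !exprM omD ombD !expr1n mulr1.
  rewrite -(subnK (ltnW hkm)) exprD -mulrA -exprMn om_omb expr1n mulr1.
  apply: om_neq1.
  by rewrite subn_gt0 hkm /=; apply: leq_ltn_trans kD; rewrite leq_subr.
- rewrite hkm mul1r -exprMn om_omb expr1n.
  by rewrite (eq_bigr (fun _ => 1)) ?sumr_const ?card_ord // => i _; rewrite expr1n.
Qed.

End Fourier.

Local Open Scope complex_scope.
Local Open Scope ring_scope.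


Section Fourier2.
Variable R : realType.
Variable D : nat.
Hypothesis hD : (0 < D)%N.
Local Notation C := R[i].
Local Notation om := (om R D).
Local Notation omb := (omb R D).

Definition cc : C := ((Num.sqrt (D%:R : R))^-1)%:C.

Lemma cc2 : cc * cc * D%:R = 1.
Proof.
rewrite /cc -!rmorphM -(rmorph_nat (real_complex R)) -rmorphM /=.
have h0 : 0 < Num.sqrt (D%:R : R) by rewrite sqrtr_gt0 ltr0n.
have -> : (Num.sqrt (D%:R : R))^-1 * (Num.sqrt (D%:R))^-1 * D%:R = 1.
  rewrite -{3}(@sqr_sqrtr _ (D%:R : R)) ?ler0n // expr2.
  by rewrite mulrACA !mulVf ?gt_eqF // mulr1.
by [].
Qed.

Lemma conj_cc : (cc)^*%C = cc.
Proof. by rewrite /cc conjc_real. Qed.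

Lemma conj_om n : (om ^+ n)^*%C = omb ^+ n.
Proof. by rewrite rmorphXn. Qed.

Lemma conj_omb n : (omb ^+ n)^*%C = om ^+ n.
Proof. by rewrite -conj_om conjcK. Qed.

Definition F (a : 'I_D -> C) (m : 'I_D) : C := cc * \sum_(p < D) a p * omb ^+ (p * m).
Definition IF (z : 'I_D -> C) (p : 'I_D) : C := cc * \sum_(m < D) z m * om ^+ (p * m).

Lemma sum_delta (f : 'I_D -> C) (m : 'I_D) (X : C) :
  \sum_(k < D) f k * ((k == m :> nat)%:R * X) = f m * X.
Proof.
rewrite (bigD1 m) //= eqxx mul1r big1 ?addr0 // => k hk.
have hk' : (k : nat) != m by []. 
by rewrite (negbTE hk') mul0r mulr0.
Qed.

Lemma FIF z m : F (IF z) m = z m.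
Proof.
rewrite /F /IF.
have e1 : forall p : 'I_D, cc * (\sum_(k < D) z k * om ^+ (p * k)) * omb ^+ (p * m)
    = cc * \sum_(k < D) z k * (om ^+ k * omb ^+ m) ^+ p.
  move=> p; rewrite -mulrA mulr_suml; congr (_ * _); apply: eq_bigr => k _.
  by rewrite exprMn -!exprM (mulnC k p) (mulnC m p) mulrA.
rewrite (eq_bigr _ (fun p _ => e1 p)) -mulr_sumr exchange_big /=.
rewrite (eq_bigr (fun k => z k * \sum_(p < D) (om ^+ k * omb ^+ m) ^+ p)); last first.
  by move=> k _; rewrite mulr_sumr.
rewrite (eq_bigr (fun k : 'I_D => z k * ((k == m :> nat)%:R * D%:R))); last first.
  by move=> k _; rewrite orth.
rewrite sum_delta; transitivity ((cc * cc * D%:R) * z m); first by ring.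
by rewrite cc2 mul1r.
Qed.

Lemma IFF a p : IF (F a) p = a p.
Proof.
rewrite /F /IF.
have e1 : forall m : 'I_D, cc * (\sum_(q < D) a q * omb ^+ (q * m)) * om ^+ (p * m)
    = cc * \sum_(q < D) a q * (om ^+ p * omb ^+ q) ^+ m.
  move=> m; rewrite -mulrA mulr_suml; congr (_ * _); apply: eq_bigr => q _.
  by rewrite exprMn -!exprM; ring.
rewrite (eq_bigr _ (fun m _ => e1 m)) -mulr_sumr exchange_big /=.
rewrite (eq_bigr (fun q => a q * \sum_(m < D) (om ^+ p * omb ^+ q) ^+ m)); last first.
  by move=> q _; rewrite mulr_sumr.
rewrite (eq_bigr (fun q : 'I_D => a q * ((q == p :> nat)%:R * D%:R))); last first.
  by move=> q _; rewrite orth // eq_sym.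
rewrite sum_delta; transitivity ((cc * cc * D%:R) * a p); first by ring.
by rewrite cc2 mul1r.
Qed.

Lemma conjcM (x y : C) : (x * y)^*%C = (x^*%C) * (y^*%C).
Proof. exact: rmorphM. Qed.

Lemma conjc_sum (f : 'I_D -> C) : (\sum_(i < D) f i)^*%C = \sum_(i < D) (f i)^*%C.
Proof. exact: rmorph_sum. Qed.

Lemma conjF b m : (F b m)^*%C = cc * \sum_(p < D) (b p)^*%C * om ^+ (p * m).
Proof.
rewrite /F conjcM conj_cc conjc_sum; congr (_ * _); apply: eq_bigr => p _.
by rewrite conjcM conj_omb.
Qed.

Lemma parseval a b :
  \sum_(p < D) a p * (b p)^*%C = \sum_(m < D) F a m * (F b m)^*%C.
Proof.
under [RHS]eq_bigr do rewrite conjF.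
rewrite [LHS](eq_bigr (fun p => (b p)^*%C * IF (F a) p)); last first.
  by move=> p _; rewrite IFF mulrC.
rewrite /IF.
under eq_bigr do rewrite mulrCA mulr_sumr.
under [RHS]eq_bigr do rewrite mulrCA mulr_sumr.
rewrite -!mulr_sumr exchange_big /=; congr (_ * _).
apply: eq_bigr => p _; apply: eq_bigr => m _; ring.
Qed.

End Fourier2.


Section Fourier3.
Variable R : realType.
Variable D : nat.
Hypothesis hD : (0 < D)%N.
Local Notation C := R[i].
Local Notation om := (om R D).
Local Notation omb := (omb R D).
Local Notation cc := (cc R D).
Local Notation F := (@F R D).
Local Notation IF := (@IF R D).

Definition vec (a : 'rV[R]_D) : 'I_D -> C := fun p => (a 0 p)%:C.

Lemma realcM (x y : R) : (x * y)%:C = x%:C * y%:C :> C.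
Proof. exact: rmorphM. Qed.

Lemma realc_sum (f : 'I_D -> R) : (\sum_(i < D) f i)%:C = \sum_(i < D) (f i)%:C :> C.
Proof. exact: rmorph_sum. Qed.

Lemma F_ext a b m : (forall p, a p = b p) -> F a m = F b m.
Proof. by move=> h; rewrite /F; congr (_ * _); apply: eq_bigr => p _; rewrite h. Qed.

Lemma cycE (h : 'rV[R]_D) n : cyc h n = h 0 (Ordinal (ltn_pmod n hD)).
Proof.
rewrite /cyc; case: insubP => [i _ hi|]; last by rewrite ltn_pmod.
by congr (h 0 _); apply: val_inj; rewrite /= hi.
Qed.

Lemma cyc_IF (h : 'rV[R]_D) n :
  (cyc h n)%:C = cc * \sum_(m < D) F (vec h) m * om ^+ (n * m).
Proof.
rewrite cycE; transitivity (IF (F (vec h)) (Ordinal (ltn_pmod n hD))).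
  by rewrite IFF.
rewrite /IF /=; congr (_ * _); apply: eq_bigr => m _; congr (_ * _).
by apply: (@om_modE R D hD); rewrite modnMml.
Qed.

Lemma star_IF (h v : 'rV[R]_D) d :
  vec (star h v) d = IF (fun m => F (vec h) m * (F (vec v) m)^*%C) d.
Proof.
rewrite {1}/vec /star /IF mxE realcM realc_sum; congr (_ * _).
under eq_bigr do rewrite realcM cyc_IF !mulr_sumr.
under [RHS]eq_bigr do rewrite conjF !mulr_sumr mulr_suml.
rewrite exchange_big /=; apply: eq_bigr => k _; apply: eq_bigr => m _.
rewrite oppr0 mulnDl exprD -/(real_complex R (v 0 m)); ring.
Qed.

Lemma F_star (h v : 'rV[R]_D) m :
  F (vec (star h v)) m = F (vec h) m * (F (vec v) m)^*%C.
Proof. by rewrite (F_ext _ (star_IF h v)) FIF. Qed.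

Lemma F_fold (L : nat) (u : 'I_L -> 'rV[R]_D) (ls : seq 'I_L) x m :
  F (vec (foldl (fun acc l => star acc (u l)) x ls)) m
  = F (vec x) m * \prod_(l <- ls) (F (vec (u l)) m)^*%C.
Proof.
elim: ls x => [|l ls IH] x /=; first by rewrite big_nil mulr1.
by rewrite IH big_cons mulrA F_star.
Qed.

Lemma dotvE (a b : 'rV[R]_D) :
  (dotv a b)%:C = \sum_(m < D) F (vec a) m * (F (vec b) m)^*%C.
Proof.
rewrite /dotv realc_sum -(parseval hD); apply: eq_bigr => p _.
by rewrite realcM /vec conjc_real.
Qed.

Definition PP (L : nat) (u : 'I_L -> 'rV[R]_D) (m : 'I_D) : C :=
  \prod_(l < L) F (vec (u l)) m.

Lemma PformE (L : nat) (hL : (1 <= L)%N) (u : 'I_L -> 'rV[R]_D) x :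
  (Pform u x)%:C = \sum_(m < D) F (vec x) m * (PP u m)^*%C.
Proof.
rewrite /Pform; case E: (enum 'I_L) => [|l0 s].
  by have := size_enum_ord L; rewrite E /= => h; rewrite -h in hL.
rewrite dotvE; apply: eq_bigr => m _; rewrite F_fold -mulrA; congr (_ * _).
rewrite /PP rmorph_prod /=.
have -> : \prod_(l < L) (F (vec (u l)) m)^*%C
    = \prod_(l <- enum 'I_L) (F (vec (u l)) m)^*%C.
  by rewrite big_enum.
by rewrite E lastI -cats1 big_cat big_seq1.
Qed.

Lemma PconvE (L : nat) (hL : (1 <= L)%N) (u : 'I_L -> 'rV[R]_D) i :
  (Pconv u 0 i)%:C = (IF (PP u) i)^*%C.
Proof.
rewrite /Pconv mxE PformE //.
rewrite /IF conjcM conjc_sum conj_cc mulr_sumr; apply: eq_bigr => m _.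
rewrite conjcM conj_om /F /vec.
rewrite (bigD1 i) //= mxE !eqxx big1 ?addr0.
  by rewrite (_ : ((true%:R : R)%:C) = 1 :> C) // mul1r; ring.
move=> p hp; rewrite mxE /= (negbTE hp).
by rewrite (_ : ((false%:R : R)%:C) = 0 :> C) // mul0r.
Qed.

Lemma F_Pconv (L : nat) (hL : (1 <= L)%N) (u : 'I_L -> 'rV[R]_D) m :
  F (vec (Pconv u)) m = PP u m.
Proof.
rewrite -(FIF hD (PP u) m); apply: F_ext => i.
by rewrite /vec -[RHS]conjcK -PconvE // conjc_real.
Qed.

Lemma F_inj (a b : 'rV[R]_D) : (forall m, F (vec a) m = F (vec b) m) -> a = b.
Proof.
move=> h; apply/rowP => i; apply: complexI.
transitivity (IF (F (vec a)) i); first by rewrite IFF.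
transitivity (IF (F (vec b)) i); last by rewrite IFF.
by rewrite /IF; congr (_ * _); apply: eq_bigr => m _; rewrite h.
Qed.

End Fourier3.


Section Fourier4.
Variable R : realType.
Variable D : nat.
Hypothesis hD : (0 < D)%N.
Local Notation C := R[i].
Local Notation om := (om R D).
Local Notation omb := (omb R D).
Local Notation cc := (cc R D).
Local Notation F := (@F R D).
Local Notation IF := (@IF R D).
Local Notation normc := (@Normc.normc R).

Lemma omb_exp n : omb ^+ n = (cos (n%:R * th R D) -i* sin (n%:R * th R D))%C.
Proof. by rewrite -conj_om expom. Qed.

Lemma sumC n (f g : 'I_n -> R) :
  \sum_(i < n) (f i +i* g i)%C = ((\sum_(i < n) f i) +i* (\sum_(i < n) g i))%C :> C.
Proof.
elim: n f g => [|n IH] f g; first by rewrite !big_ord0.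
by rewrite !big_ord_recr IH.
Qed.

Lemma realcMC (x a b : R) : x%:C * (a +i* b)%C = ((x * a) +i* (x * b))%C :> C.
Proof.
rewrite -[((_ +i* _) * (_ +i* _))%C]/(_ +i* _)%C.
by congr (_ +i* _)%C; ring.
Qed.

Lemma F_vec (a : 'rV[R]_D) m : F (vec a) m = (dft_re a m +i* dft_im a m)%C.
Proof.
rewrite /F /dft_re /dft_im.
under eq_bigr do rewrite omb_exp /vec realcMC.
rewrite sumC realcMC; congr (Complex (_ * _) (_ * _)); apply: eq_bigr => p _.
  by congr (_ * cos _); rewrite natrM /th; ring.
by congr (_ * - sin _); rewrite natrM /th; ring.
Qed.

Lemma dft_absE (a : 'rV[R]_D) m : dft_abs a m = normc (F (vec a) m).
Proof. by rewrite F_vec. Qed.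

Lemma normc_sq (z : C) : z * z^*%C = ((normc z) ^+ 2)%:C.
Proof.
case: z => x y /=; rewrite sqr_sqrtr ?addr_ge0 ?sqr_ge0 //.
rewrite -[((_ +i* _) * (_ +i* _))%C]/(_ +i* _)%C.
by congr (_ +i* _)%C; ring.
Qed.

Lemma normc_ge0 (z : C) : 0 <= normc z.
Proof. by case: z => x y /=; rewrite sqrtr_ge0. Qed.

Lemma normc_conj (z : C) : normc (z^*%C) = normc z.
Proof. by case: z => x y /=; rewrite sqrrN. Qed.

Lemma normc_real (x : R) : 0 <= x -> normc (x%:C) = x.
Proof. by move=> hx /=; rewrite expr0n /= addr0 sqrtr_sqr ger0_norm. Qed.

Lemma parsR (a : 'rV[R]_D) :
  \sum_(d < D) (a 0 d) ^+ 2 = \sum_(m < D) (normc (F (vec a) m)) ^+ 2.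
Proof.
apply: complexI; rewrite !realc_sum.
rewrite (eq_bigr (fun d => vec a d * (vec a d)^*%C)); last first.
  by move=> d _; rewrite /vec conjc_real expr2 realcM.
by rewrite parseval //; apply: eq_bigr => m _; rewrite normc_sq.
Qed.

Definition negO (m : 'I_D) : 'I_D := Ordinal (ltn_pmod (D - m) hD).

Lemma negO_inv m : negO (negO m) = m.
Proof.
apply: val_inj => /=; case: (posnP m) => [->|hm].
  by rewrite subn0 modnn subn0 modnn.
rewrite (@modn_small (D - m)); last by rewrite ltn_subrL hm hD.
by rewrite subKn ?modn_small // ltnW.
Qed.

Lemma negO_inj : injective negO.
Proof. exact: (can_inj negO_inv). Qed.

Lemma om_neg p (m : 'I_D) : om ^+ (p * negO m) = omb ^+ (p * m).
Proof.
rewrite (@om_modE R D hD _ (p * (D - m))); last by rewrite /= modnMmr.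
have h1 : om ^+ (p * m) * omb ^+ (p * m) = 1 by rewrite -exprMn om_omb expr1n.
rewrite -[LHS]mulr1 -h1 mulrA -exprD.
by rewrite -mulnDr subnK ?(ltnW (ltn_ord m)) // mulnC exprM (@omD R D hD) expr1n mul1r.
Qed.

Lemma omb_neg p (m : 'I_D) : omb ^+ (p * negO m) = om ^+ (p * m).
Proof. by rewrite -conj_om om_neg conj_omb. Qed.

Lemma real_IF (z : 'I_D -> C) : (forall m, z (negO m) = (z m)^*%C) ->
  forall p, (IF z p)^*%C = IF z p.
Proof.
move=> hz p; rewrite /IF conjcM conj_cc conjc_sum; congr (_ * _).
rewrite [RHS](reindex_inj negO_inj); apply: eq_bigr => m _.
by rewrite conjcM conj_om hz om_neg.
Qed.

Lemma F_negO (a : 'rV[R]_D) m : F (vec a) (negO m) = (F (vec a) m)^*%C.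
Proof.
rewrite conjF /F; congr (_ * _); apply: eq_bigr => p _.
by rewrite omb_neg /vec conjc_real.
Qed.

Lemma real_of_conj (w : C) : w^*%C = w -> (complex.Re w)%:C = w.
Proof.
case: w => x y /= [] h.
have -> : y = 0 by lra.
by [].
Qed.

Definition realize (z : 'I_D -> C) : 'rV[R]_D := \row_(p < D) complex.Re (IF z p).

Lemma F_realize z : (forall m, z (negO m) = (z m)^*%C) ->
  forall m, F (vec (realize z)) m = z m.
Proof.
move=> hz m; rewrite -(FIF hD z m); apply: F_ext => p.
by rewrite /vec mxE real_of_conj // real_IF.
Qed.

End Fourier4.


Section Main.
Variable R : realType.
Local Notation C := R[i].
Local Notation normc := (@Normc.normc R).

Lemma pow_helper (x : R) (L : nat) : 0 <= x -> x `^ (2 / L%:R) = (x ^+ 2) `^ (L%:R^-1).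
Proof. by move=> hx; rewrite -powR_mulrn // -powRrM. Qed.

Lemma powK (y : R) (L : nat) : 0 <= y -> (0 < L)%N -> (y ^+ L) `^ (L%:R^-1) = y.
Proof.
move=> hy hL; rewrite -powR_mulrn // -powRrM mulfV ?powRr1 //.
by rewrite pnatr_eq0 -lt0n.
Qed.

Lemma powK' (y : R) (L : nat) : 0 <= y -> (0 < L)%N -> (y `^ (L%:R^-1)) ^+ L = y.
Proof.
move=> hy hL; rewrite -powR_mulrn ?powR_ge0 // -powRrM mulVf ?powRr1 //.
by rewrite pnatr_eq0 -lt0n.
Qed.

Lemma normc_prod n (f : 'I_n -> C) :
  normc (\prod_(l < n) f l) = \prod_(l < n) normc (f l).
Proof.
elim: n f => [|n IH] f; first by rewrite !big_ord0 Normc.normc1.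
by rewrite !big_ord_recr Normc.normcM IH.
Qed.

Lemma lower (L D : nat) (hL : (1 <= L)%N) (hD : (0 < D)%N) (u : 'I_L -> 'rV[R]_D) m :
  L%:R * (dft_abs (Pconv u) m) `^ (2 / L%:R)
  <= \sum_(l < L) (normc (F (vec (u l)) m)) ^+ 2.
Proof.
rewrite dft_absE F_Pconv // /PP normc_prod pow_helper; last first.
  by apply: prodr_ge0 => l _; apply: normc_ge0.
rewrite -prodrXl.
have hE : forall l : 'I_L, 0 <= normc (F (vec (u l)) m) ^+ 2.
  by move=> l; rewrite exprn_ge0 // normc_ge0.
have agm := (@leif_AGM R 'I_L predT (fun l => normc (F (vec (u l)) m) ^+ 2)
   (fun i _ => hE i)).1.
rewrite cardT size_enum_ord in agm.
set S := \sum_(l < L) normc (F (vec (u l)) m) ^+ 2.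
have hS : 0 <= S by apply: sumr_ge0 => l _.
have hL0 : (0 : R) < L%:R by rewrite ltr0n.
have h2 := ge0_ler_powR (r := L%:R^-1) _ _ _ agm.
rewrite powK ?divr_ge0 ?ler0n // in h2.
have h3 : (\prod_(l < L) normc (F (vec (u l)) m) ^+ 2) `^ L%:R^-1 <= S / L%:R.
  apply: h2; rewrite ?invr_ge0 ?ler0n //.
    by rewrite nnegrE; apply: prodr_ge0 => l _.
  by rewrite nnegrE exprn_ge0 // divr_ge0 // ler0n.
apply: le_trans (ler_wpM2l (ler0n _ L) h3) _.
by rewrite mulrC divfK ?gt_eqF.
Qed.

End Main.

Unset Implicit Arguments.

Theorem lemma4 (R : realType) (L D : nat) (hL : (1 <= L)%N) (hD : (1 <= D)%N)
  (w : 'rV[R]_D) :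
  (exists u : 'I_L -> 'rV[R]_D,
      Pconv u = w /\ sqnorm u = L%:R * quasinorm_pow w (2 / L%:R)) /\
  (forall u : 'I_L -> 'rV[R]_D,
      Pconv u = w -> L%:R * quasinorm_pow w (2 / L%:R) <= sqnorm u).
Proof.
split; last first.
  move=> u hu; rewrite /sqnorm /quasinorm_pow.
  under [X in _ <= X]eq_bigr do rewrite (parsR hD).
  rewrite exchange_big /= mulr_sumr; apply: ler_sum => m _.
  by rewrite -hu; apply: lower.
case: L hL => [//|L'] hL.
pose N := fun m => dft_abs w m.
pose r := fun m => N m `^ ((L'.+1)%:R^-1).
pose z0 := fun m => F (vec w) m * (((r m) ^+ L')^-1)%:C.
pose zz := fun (l : 'I_L'.+1) m => if l == ord0 then z0 m else (r m)%:C.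
have hNs : forall m, N (negO hD m) = N m.
  by move=> m; rewrite /N !dft_absE F_negO normc_conj.
have hsym : forall l m, zz l (negO hD m) = (zz l m)^*%C.
  move=> l m; rewrite /zz; case: ifP => _; last by rewrite conjc_real /r hNs.
  by rewrite /z0 conjcM conjc_real F_negO /r hNs.
exists (fun l => realize (zz l)).
have hF : forall l m, F (vec (realize (zz l))) m = zz l m.
  by move=> l; apply: F_realize.
have hN0 : forall m, 0 <= N m by move=> m; rewrite /N dft_absE normc_ge0.
have hN : forall m, N m = r m ^+ L'.+1 by move=> m; rewrite /r powK'.
have hr0 : forall m, 0 <= r m by move=> m; apply: powR_ge0.
split.
  apply: (F_inj hD) => m; rewrite F_Pconv // /PP.
  under eq_bigr do rewrite hF.
  rewrite big_ord_recl /zz eqxx.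
  rewrite (eq_bigr (fun _ => (r m)%:C)); last by move=> i _.
  rewrite prodr_const card_ord -rmorphXn /z0 -mulrA -rmorphM /=.
  case: (eqVneq (r m ^+ L') 0) => h.
    have hFw : F (vec w) m = 0.
      apply: Normc.eq0_normc; rewrite -dft_absE -/(N m) hN exprS.
      by move/eqP: h; rewrite expf_eq0 => /andP[_ /eqP ->]; rewrite mul0r.
    by rewrite hFw mul0r.
  by rewrite mulVf // mulr1.
rewrite /sqnorm /quasinorm_pow.
under eq_bigr do rewrite (parsR hD).
rewrite exchange_big mulr_sumr /=; apply: eq_bigr => m _.
under eq_bigr do rewrite hF.
have e : forall l, Normc.normc (zz l m) ^+ 2 = N m `^ (2 / L'.+1%:R).
  move=> l; have -> : Normc.normc (zz l m) = r m.
    rewrite /zz; case: ifP => _; last by rewrite normc_real.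
    rewrite /z0 Normc.normcM normc_real ?invr_ge0 ?exprn_ge0 //.
    rewrite -dft_absE -/(N m) hN.
    case: (eqVneq (r m) 0) => [->|h]; first by rewrite expr0n /= mul0r.
    by rewrite exprS mulfK ?expf_neq0.
  by rewrite /r -powR_mulrn ?powR_ge0 // -powRrM mulrC.
rewrite (eq_bigr _ (fun l _ => e l)) sumr_const card_ord.
by rewrite [RHS]mulr_natl.
Qed.
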